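(* Let $(D_n)_{n\in\mathbb Z}$ be the integer sequence with $D_0=1$, $D_1=D_2=0$ and $D_n+D_{n+1}=D_{n+3}$ for all $n\in\mathbb Z$ (so $D_{-1}=-1$). For integers $n,i,j$ let $$\Delta'_{n,n+i,n+i+j}=\det\begin{pmatrix}D_{n+2} & D_{n+4} & D_{n+3}\\ D_{n+i+2} & D_{n+i+4} & D_{n+i+3}\\ D_{n+i+j+2} & D_{n+i+j+4} & D_{n+i+j+3}\end{pmatrix}.$$ Then $\Delta'_{n,n+i,n+i+j}$ does not depend on $n$, and for all $n,i,j\in\mathbb Z$, $$\Delta'_{n,n+i,n+i+j}=D_{i+2}D_{i+j+4}-D_{i+j+2}D_{i+4}.$$ *)

(* Defs.v *)
From mathcomp Require Import all_boot all_order all_algebra.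
Set Implicit Arguments. Unset Strict Implicit. Unset Printing Implicit Defensive.
Import Order.TTheory GRing.Theory Num.Theory.
Local Open Scope ring_scope.

Definition is_D_seq (D : int -> int) : Prop :=
  [/\ D 0 = 1, D 1 = 0, D 2 = 0 & forall n : int, D n + D (n + 1) = D (n + 3)].

Definition Delta' (D : int -> int) (n i j : int) : int :=
  \det (\matrix_(r < 3, c < 3)
          D (n + nth 0 [:: 0; i; i + j] r + nth 0 [:: 2; 4; 3] c)).

(* Main.v *)
Require Import Defs.
From mathcomp Require Import all_boot all_order all_algebra.
From mathcomp Require Import ring.
Import Order.TTheory GRing.Theory Num.Theory.
Local Open Scope ring_scope.

Lemma det3 (R : comNzRingType) (A : 'M[R]_3) : \det A =
  A 0 0 * (A 1 1 * A 2 2 - A 1 2 * A 2 1) - A 0 1 * (A 1 0 * A 2 2 - A 1 2 * A 2 0)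
  + A 0 2 * (A 1 0 * A 2 1 - A 1 1 * A 2 0).
Proof.
rewrite (expand_det_row _ 0) !big_ord_recl big_ord0 /cofactor.
rewrite !(expand_det_row _ 0) !big_ord_recl !big_ord0 /cofactor !det_mx11 /=.
rewrite !mxE /=.
set f := fun i j : nat => A (inord i) (inord j).
have HA : forall x y, A x y = f (val x) (val y) by move=> x y; rewrite /f !inord_val.
rewrite !HA /= /bump /=.
rewrite !expr0 ?expr1 ?expr2. ring.
Qed.

Lemma DeltaE (D : int -> int) n i j : Delta' D n i j =
  let a x := D (n + x + 2) in let b x := D (n + x + 4) in let c x := D (n + x + 3) in
  a 0 * (b i * c (i + j) - c i * b (i + j)) - b 0 * (a i * c (i + j) - c i * a (i + j))
  + c 0 * (a i * b (i + j) - b i * a (i + j)).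
Proof.
rewrite /Delta' det3 !mxE /=. by [].
Qed.

Lemma step (D : int -> int) (hR : forall x, D x + D (x + 1) = D (x + 3)) n i j :
  Delta' D (n + 1) i j = Delta' D n i j.
Proof.
rewrite !DeltaE /=.
have E1 x : D (n + 1 + x + 2) = D (n + x + 3) by congr D; ring.
have E2 x : D (n + 1 + x + 3) = D (n + x + 4) by congr D; ring.
have E3 x : D (n + 1 + x + 4) = D (n + x + 2) + D (n + x + 3).
  rewrite -[n + 1 + x + 4](_ : (n + x + 2) + 3 = _); last by ring.
  rewrite -hR; congr (_ + D _); ring.
rewrite !E1 !E2 !E3; ring.
Qed.

Lemma const (D : int -> int) (hR : forall x, D x + D (x + 1) = D (x + 3)) n i j :
  Delta' D n i j = Delta' D 0 i j.
Proof.
elim/int_rect: n => [//|k IH|k IH].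
  have -> : (k.+1)%:Z = k%:Z + 1 by rewrite -addn1 PoszD.
  by rewrite step.
rewrite -IH -(step _ hR); congr Delta'.
have -> : (k.+1)%:Z = k%:Z + 1 by rewrite -addn1 PoszD.
by rewrite opprD addrNK.
Qed.

Theorem theorem18 (D : int -> int) :
  is_D_seq D ->
  (forall n m i j : int, Delta' D n i j = Delta' D m i j) /\
  (forall n i j : int,
      Delta' D n i j = D (i + 2) * D (i + j + 4) - D (i + j + 2) * D (i + 4)).
Proof.
case=> D0 D1 D2 hR.
have C n m i j : Delta' D n i j = Delta' D m i j.
  by rewrite (const _ hR) (const _ hR m).
split=> // n i j.
rewrite (C n 0) DeltaE /= !add0r.
have D3 : D 3 = 1 by rewrite -[3]add0r -hR D0 D1.
have D4 : D 4 = 0 by rewrite -(_ : 1 + 3 = 4) // -hR D1 D2.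
rewrite D2 D3 D4; ring.
Qed.
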